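(* Let $n \ge 2$ be an integer and let $\underline{x}_1,\bar{x}_1,\underline{x}_2,\bar{x}_2 \in \mathbb{R}$ with $1 \le \underline{x}_i < \bar{x}_i$ for $i \in \{1,2\}$. For every $(x_1,x_2) \in [\underline{x}_1,\bar{x}_1] \times [\underline{x}_2,\bar{x}_2]$, every point $y \in \mathbb{R}^{n+2}$ that is feasible for the lower-level problem $$\max_{y \in \mathbb{R}^{n+2}} \; y_1 - y_n\,(x_1 + x_2 - y_{n+1} - y_{n+2})$$ subject to $y_1 + y_n = \tfrac12$, $y_i^2 \le y_{i+1}$ for $i \in \{1,\dots,n-1\}$, $y_i \ge 0$ for $i \in \{1,\dots,n\}$, $y_{n+1} \in [0,x_1]$, $y_{n+2} \in [-x_2,x_2]$, satisfies $y_n > 0$.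
   Context: This lower-level problem is the follower's problem of a bilevel problem whose leader chooses $x=(x_1,x_2)$ in the box $[\underline{x}_1,\bar{x}_1] \times [\underline{x}_2,\bar{x}_2]$. *)

(* Defs.v *)
From Stdlib Require Import Reals Lra.
Open Scope R_scope.

(* Points y in R^(n+2) are represented as functions y : nat -> R,
   using 1-based indices 1..n+2; values at other indices are irrelevant. *)

Definition lower_obj (n : nat) (x1 x2 : R) (y : nat -> R) : R :=
  y 1%nat - y n * (x1 + x2 - y (n + 1)%nat - y (n + 2)%nat).

Definition lower_feasible (n : nat) (x1 x2 : R) (y : nat -> R) : Prop :=
  y 1%nat + y n = 1 / 2 /\
  (forall i : nat, (1 <= i <= n - 1)%nat -> (y i) ^ 2 <= y (i + 1)%nat) /\
  (forall i : nat, (1 <= i <= n)%nat -> 0 <= y i) /\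
  (0 <= y (n + 1)%nat <= x1) /\
  (- x2 <= y (n + 2)%nat <= x2).

(* Main.v *)
Require Import Defs.
From Stdlib Require Import Reals Lra Lia.
Open Scope R_scope.

Theorem mainTheorem1 (n : nat) (xl1 xu1 xl2 xu2 : R) :
  (2 <= n)%nat ->
  1 <= xl1 -> xl1 < xu1 -> 1 <= xl2 -> xl2 < xu2 ->
  forall x1 x2 : R, xl1 <= x1 <= xu1 -> xl2 <= x2 <= xu2 ->
  forall y : nat -> R, lower_feasible n x1 x2 y -> 0 < y n.
Proof.
  intros Hn _ _ _ _ x1 x2 _ _ y [H1 [H2 [H3 _]]].
  assert (Hyn : 0 <= y n) by (apply H3; lia).
  destruct (Rle_lt_dec (y n) 0) as [Hle|Hlt]; [|exact Hlt].
  assert (Hy1 : y 1%nat = 1/2) by lra.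
  assert (K : forall m, (m + 1 <= n)%nat -> 0 < y (m + 1)%nat).
  { induction m as [|m IH]; intros Hm.
    - simpl. lra.
    - assert (Hp := IH ltac:(lia)).
      assert (Hs := H2 (m+1)%nat ltac:(lia)).
      replace (S m + 1)%nat with (m + 1 + 1)%nat by lia.
      assert (0 < y (m+1)%nat ^ 2) by (apply pow_lt; exact Hp).
      lra. }
  replace n with ((n - 1) + 1)%nat by lia.
  apply K; lia.
Qed.
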